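(* Let $V$ be a real vector space of dimension $d>1$ and $\Gamma<\mathrm{SL}(V)$ a torsion-free projective Anosov subgroup. If $\gamma_k\in\Gamma$ is a sequence with distinct boundary limits $\gamma_+=\lim\gamma_k\in\partial_\infty\Gamma$ and $\gamma_-=\lim\gamma_k^{-1}\in\partial_\infty\Gamma$, then $\lambda_1(\gamma_k)\to\infty$.
   Context: For $g\in\mathrm{SL}(V)$, $\lambda_1(g)$ is the logarithm of the spectral radius of $g$ (more generally $\lambda_1\ge\lambda_2\ge\dots$ are the logarithms of the moduli of eigenvalues). Projective Anosov: finitely generated Gromov hyperbolic with $\lambda_1(\gamma)-\lambda_2(\gamma)\ge c|\gamma|_\infty-c'$ for some $c,c'>0$, $|\cdot|_\infty$ stable word length. Limits are taken in the compactification $\Gamma\cup\partial_\infty\Gamma$ by the Gromov boundary. *)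

(* Defs.v *)
From HB Require Import structures.
From mathcomp Require Import all_boot all_order all_algebra.
From mathcomp Require Import all_classical all_reals all_analysis.
From mathcomp.real_closed Require Import complex.
Set Implicit Arguments. Unset Strict Implicit. Unset Printing Implicit Defensive.
Import Order.TTheory GRing.Theory Num.Theory numFieldNormedType.Exports.
Local Open Scope ring_scope.
Local Open Scope classical_set_scope.

Section Defs.
Variables (R : realType) (d : nat).
Implicit Types (g h : 'M[R]_d) (G : set 'M[R]_d) (S : seq 'M[R]_d).

(* complex eigenvalues (with multiplicity) of g: the roots of its characteristic
   polynomial over R[i] *)
Definition eigenvalues g : seq R[i] :=
  sval (closed_field_poly_normal (char_poly (map_mx (fun x : R => x%:C%C) g))).

Definition eig_moduli g : seq R :=
  sort (fun x y : R => y <= x) [seq ComplexField.Normc.normc z | z <- eigenvalues g].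

(* lambda_ i g = log of the i-th largest modulus of an eigenvalue
   (0-indexed: lambda_ 0 = lambda_1 of the paper, lambda_ 1 = lambda_2) *)
Definition lambda_ (i : nat) g : R := ln (nth 0 (eig_moduli g) i).

Definition mpow g (k : nat) : 'M[R]_d := iter k (mulmx g) 1%:M.

Definition is_subgroup_SL G : Prop :=
  [/\ G 1%:M,
      (forall g h, G g -> G h -> G (g *m h)),
      (forall g, G g -> G (invmx g)) &
      (forall g, G g -> \det g = 1)].

Definition torsion_free G : Prop :=
  forall g k, G g -> (0 < k)%N -> mpow g k = 1%:M -> g = 1%:M.

Definition is_letter S (x : 'M[R]_d) : Prop := (x \in S) \/ (invmx x \in S).
Definition word_eval (w : seq 'M[R]_d) : 'M[R]_d := foldr mulmx 1%:M w.
Definition has_word_of_length S g (m : nat) : Prop :=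
  exists w : seq 'M[R]_d,
    [/\ size w = m, (forall x, x \in w -> is_letter S x) & word_eval w = g].

Definition generates S G : Prop :=
  (forall s, s \in S -> G s) /\ (forall g, G g -> exists m, has_word_of_length S g m).

Definition word_length S g : nat :=
  xget 0%N [set m | has_word_of_length S g m /\
                    (forall m', has_word_of_length S g m' -> (m <= m')%N)].

Definition stable_length S g : R :=
  lim ((fun n : nat => ((word_length S (mpow g n.+1))%:R / (n.+1)%:R : R)) @ \oo).

(* Gromov product at the identity in the word metric d_S(x,y) = |x^{-1} y|_S *)
Definition gromov_product S g h : R :=
  ((word_length S g)%:R + (word_length S h)%:R
     - (word_length S (invmx g *m h))%:R) / 2.

Definition gromov_hyperbolic S G : Prop :=
  exists delta : R, forall x y z, G x -> G y -> G z ->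
    Num.min (gromov_product S x y) (gromov_product S y z) - delta
      <= gromov_product S x z.

Definition projective_anosov S G : Prop :=
  gromov_hyperbolic S G /\
  exists c c' : R, 0 < c /\ 0 < c' /\
    forall g, G g -> c * stable_length S g - c' <= lambda_ 0 g - lambda_ 1 g.

(* the sequence u converges (in Gamma \cup \partial Gamma) to a point of the
   Gromov boundary:  (u_i | u_j) -> oo as i, j -> oo *)
Definition converges_at_infinity S (u : nat -> 'M[R]_d) : Prop :=
  forall M : R, exists N, forall i j, (N <= i)%N -> (N <= j)%N ->
    M <= gromov_product S (u i) (u j).

(* two sequences converging at infinity have the same boundary limit *)
Definition same_boundary_limit S (u v : nat -> 'M[R]_d) : Prop :=
  forall M : R, exists N, forall i j, (N <= i)%N -> (N <= j)%N ->
    M <= gromov_product S (u i) (v j).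

End Defs.

(* Main.v *)
Require Import Defs.
From HB Require Import structures.
From mathcomp Require Import all_boot all_order all_algebra.
From mathcomp Require Import all_classical all_reals all_analysis.
From mathcomp.real_closed Require Import complex.
From mathcomp Require Import ring lra.
From Stdlib Require Import Classical.
Import Order.TTheory GRing.Theory Num.Theory numFieldNormedType.Exports.
Local Open Scope ring_scope.
Local Open Scope classical_set_scope.
Lemma prodN_seq (F : comRingType) (r : seq F) :
  \prod_(z <- r) (- z) = (-1) ^+ size r * \prod_(z <- r) z.
Proof.
elim: r => [|z r IH]; first by rewrite !big_nil expr0 mulr1.
by rewrite !big_cons IH /= exprS; ring.
Qed.

Lemma eig_props (R : realType) (d : nat) (g : 'M[R]_d) :
  \det g = 1 ->
  [/\ size (eig_moduli g) = d,
      sorted (fun x y : R => y <= x) (eig_moduli g),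
      all (fun x => 0 <= x) (eig_moduli g) &
      \prod_(x <- eig_moduli g) x = 1].
Proof.
move=> dg.
set A := map_mx (fun x : R => x%:C%C) g.
have Hp := svalP (closed_field_poly_normal (char_poly A)).
rewrite -/(eigenvalues g) in Hp.
have mon : lead_coef (char_poly A) = 1 by apply/monicP; exact: char_poly_monic.
rewrite mon scale1r in Hp.
have sz : size (eigenvalues g) = d.
  have := size_char_poly A; rewrite Hp size_prod_XsubC; by case.
have pr : \prod_(z <- eigenvalues g) z = 1.
  have := char_poly_det A.
  have -> : \det A = (\det g)%:C%C.
    rewrite /A; exact: (det_map_mx (real_complex R)).
  rewrite dg -horner_coef0 Hp horner_prod.
  under eq_bigr do rewrite hornerXsubC sub0r.
  rewrite prodN_seq sz mulr1 => /(congr1 (fun x => (-1) ^+ d * x)).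
  by rewrite !mulrA -exprD -signr_odd oddD addbb expr0 !mul1r.
have pm := permEl (perm_sort (fun x y : R => y <= x)
   [seq ComplexField.Normc.normc z | z <- eigenvalues g]).
rewrite /eig_moduli; split.
- by rewrite size_sort size_map.
- by apply: sort_sorted => x y; exact: le_total.
- apply/allP => x; rewrite mem_sort => /mapP [z _ ->].
  by rewrite /ComplexField.Normc.normc; case: z => ? ? /=; exact: sqrtr_ge0.
- rewrite (perm_big _ pm) big_map.
  rewrite -(big_morph _ (@ComplexField.Normc.normcM R) (@ComplexField.Normc.normc1 R)).
  by rewrite pr ComplexField.Normc.normc1.
Qed.
Lemma seq_ln_lemma (R : realType) (a b : R) (t : seq R) :
  sorted (fun x y : R => y <= x) [:: a, b & t] ->
  all (fun x => 0 <= x) [:: a, b & t] ->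
  \prod_(x <- [:: a, b & t]) x = 1 ->
  0 <= ln a + ln b.
Proof.
move=> so pos pr.
have tb : all (fun x => x <= b) t.
  have /= /andP[_ so2] := so.
  have := @order_path_min _ (fun x y : R => y <= x) _ _ _ so2.
  apply; move=> u v w /= h1 h2; exact: le_trans h2 h1.
move: pos => /= /and3P[a0 b0 /allP t0].
move: so => /= /andP[ba _].
rewrite !big_cons in pr.
have tpos : 0 <= \prod_(x <- t) x by rewrite big_seq; apply: prodr_ge0 => x xt; apply: t0.
have ab0 : a * b != 0.
  apply/eqP => h; move: pr; rewrite mulrA h mul0r => /eqP; by rewrite eq_sym oner_eq0.
have ap : 0 < a.
  rewrite lt_def a0 andbT; apply: contraNneq ab0 => ->; by rewrite mul0r.
have bp : 0 < b.
  rewrite lt_def b0 andbT; apply: contraNneq ab0 => ->; by rewrite mulr0.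
rewrite -lnM ?posrE //.
apply: ln_ge0.
case: (leP 1 b) => b1.
  by rewrite -[1]mulr1 ler_pM // ?(le_trans b1 ba).
have tle1 : \prod_(x <- t) x <= 1.
  rewrite big_seq; apply: prodr_ile1 => x xt; rewrite t0 //=.
  by rewrite (le_trans _ (ltW b1)) // (allP tb).
rewrite -pr mulrA.
have [H|tp] := eqVneq (\prod_(x <- t) x) 0.
  by move: pr; rewrite H !mulr0 => /eqP; rewrite eq_sym oner_eq0.
by rewrite ler_piMr // mulr_ge0.
Qed.
Lemma lam_sum (R : realType) (d : nat) (g : 'M[R]_d) :
  (1 < d)%N -> \det g = 1 -> 0 <= lambda_ 0 g + lambda_ 1 g.
Proof.
move=> d1 dg; have [sz so al pr] := @eig_props R d g dg.
rewrite /lambda_; move: sz so al pr.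
case: (eig_moduli g) => [|a [|b t]] sz so al pr; try by rewrite -sz in d1.
exact: (@seq_ln_lemma R a b t so al pr).
Qed.
Set Implicit Arguments. Unset Strict Implicit.

Lemma invmxM' (R : comUnitRingType) n (A B : 'M[R]_n) :
  A \in unitmx -> B \in unitmx -> invmx (A *m B) = invmx B *m invmx A.
Proof.
move=> uA uB.
have uC : A *m B \in unitmx by rewrite unitmx_mul uA uB.
have h : (invmx B *m invmx A) *m (A *m B) = 1%:M.
  by rewrite -mulmxA [invmx A *m _]mulmxA mulVmx // mul1mx mulVmx.
by rewrite -[invmx B *m _]mulmx1 -(mulmxV uC) mulmxA h mul1mx.
Qed.

Lemma subadd_mul (R : realType) (a : nat -> R) :
  a 0%N = 0 ->
  (forall m n, a (m + n)%N <= a m + a n) ->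
  forall q k r, a (q * k + r)%N <= q%:R * a k + r%:R * a 1%N.
Proof.
move=> a0 sa.
have h1 : forall q k, a (q * k)%N <= q%:R * a k.
  move=> q k; elim: q => [|q IH]; first by rewrite mul0n mul0r a0.
  rewrite mulSn; apply: le_trans (sa _ _) _; rewrite -addn1 natrD mulrDl mul1r; lra.
have h2 : forall r, a r <= r%:R * a 1%N.
  elim => [|r IH]; first by rewrite mul0r a0.
  rewrite -addn1; apply: le_trans (sa _ _) _; rewrite natrD mulrDl mul1r; lra.
move=> q k r; apply: le_trans (sa _ _) _.
have := h1 q k; have := h2 r; lra.
Qed.
Lemma fekete (R : realType) (a : nat -> R) :
  a 0%N = 0 -> (forall n, 0 <= a n) ->
  (forall m n, a (m + n)%N <= a m + a n) ->
  cvg ((fun n : nat => a n.+1 / n.+1%:R) @ \oo).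
Proof.
move=> a0 ap sa.
set b := fun n : nat => a n.+1 / n.+1%:R.
have bp : forall n, 0 <= b n by move=> n; rewrite /b divr_ge0.
set E := range b.
have hinf : has_inf E.
  split; first by exists (b 0%N); exists 0%N.
  by exists 0 => _ [n _ <-].
apply/cvg_ex; exists (inf E).
apply/cvgrPdist_le => e e0.
have [_ [m _ <-] bm] := @inf_adherent R E (e / 2) (divr_gt0 e0 (ltr0Sn _ 1)) hinf.
have lbE := ge_inf hinf.2.
set K := m%:R * a 1%N.
have K0 : 0 <= K by rewrite /K mulr_ge0.
near=> n.
have hbn : inf E <= b n by apply: lbE; exists n.
rewrite distrC ger0_norm ?subr_ge0 //.
have key : a n.+1 <= n.+1%:R * b m + K.
  have := divn_eq n.+1 m.+1.
  set q := (n.+1 %/ m.+1)%N; set r := (n.+1 %% m.+1)%N => hn.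
  have rm : (r <= m)%N by rewrite -ltnS ltn_mod.
  have qm : (q * m.+1 <= n.+1)%N by rewrite hn leq_addr.
  rewrite hn; apply: le_trans (@subadd_mul R a a0 sa q m.+1 r) _.
  have -> : a m.+1 = m.+1%:R * b m.
    by rewrite /b mulrC divfK // pnatr_eq0.
  have h1 : q%:R * (m.+1%:R * b m) <= (q * m.+1 + r)%N%:R * b m.
    rewrite mulrA -natrM; apply: ler_wpM2r => //; rewrite ler_nat leq_addr //.
  have h2 : r%:R * a 1%N <= K.
    by rewrite /K ler_wpM2r // ler_nat.
  lra.
have N0 : 0 < n.+1%:R :> R by rewrite ltr0Sn.
have hN : 2 * K / e <= n%:R by near: n; exact: nbhs_infty_ger.
have hK : K / n.+1%:R <= e / 2.
  rewrite ler_pdivrMr //.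
  move: hN; rewrite ler_pdivrMr // => hN; rewrite -[n.+1%:R]natr1.
  have e0' : 0 <= e by exact: ltW.
  nra.
have hb : b n <= b m + K / n.+1%:R.
  rewrite /b ler_pdivrMr // mulrDl divfK ?gt_eqF //.
  by rewrite [_ * n.+1%:R]mulrC.
rewrite lerBlDl; apply: le_trans hb _; rewrite [e in _ <= _ + e]splitr addrA lerD // ltW // addrC.
Unshelve. all: by end_near.
Qed.
Lemma chain_arith (R : realType) (a : nat -> R) (L A dl : R) :
  a 0%N = 0 -> a 1%N = L -> 0 <= A -> 0 <= dl -> 2 * A + 2 * dl < L ->
  (forall n, Num.min ((L + a n.+1 - a n) / 2) ((a n.+1 + L - a n.+2) / 2) - dl <= A) ->
  forall n, n%:R * (L - 2 * A - 2 * dl) <= a n.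
Proof.
move=> a0 a1 A0 d0 hL H.
have step : forall n, a n + (L - 2 * A - 2 * dl) <= a n.+1.
  elim => [|n IH]; first by rewrite a0 a1; lra.
  have := H n; rewrite lerBlDr ge_min => /orP [h|h]; lra.
elim => [|n IH]; first by rewrite a0 mul0r.
have := step n; rewrite -natr1; lra.
Qed.
Section WL.
Variables (R : realType) (d : nat) (Gamma : set 'M[R]_d) (S : seq 'M[R]_d).
Hypotheses (HG : is_subgroup_SL Gamma) (HS : generates S Gamma).

Local Notation wl := (word_length S).

Lemma G_unit g : Gamma g -> g \in unitmx.
Proof. by case: HG => _ _ _ hd /hd; rewrite unitmxE => ->; exact: unitr1. Qed.

Lemma G_inv g : Gamma g -> Gamma (invmx g).
Proof. by case: HG => _ _ hi _ /hi. Qed.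

Lemma G_mul g h : Gamma g -> Gamma h -> Gamma (g *m h).
Proof. by case: HG => _ hm _ _; apply: hm. Qed.

Lemma G_one : Gamma 1%:M.
Proof. by case: HG. Qed.

Lemma letter_G x : is_letter S x -> Gamma x.
Proof.
case: HS => hs _ [/hs //|/hs/G_inv]; rewrite invmxK //.
Qed.

Lemma word_eval_cat (w1 w2 : seq 'M[R]_d) : word_eval (w1 ++ w2) = word_eval w1 *m word_eval w2.
Proof.
elim: w1 => [|x w IH] /=; first by rewrite mul1mx.
by rewrite IH mulmxA.
Qed.

Lemma word_G (w : seq 'M[R]_d) : (forall x, x \in w -> is_letter S x) -> Gamma (word_eval w).
Proof.
elim: w => [|x w IH] hw /=; first exact: G_one.
apply: G_mul; first by apply: letter_G; apply: hw; rewrite inE eqxx.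
by apply: IH => y yw; apply: hw; rewrite inE yw orbT.
Qed.

Lemma wl_spec g : Gamma g ->
  has_word_of_length S g (wl g) /\
  forall m, has_word_of_length S g m -> (wl g <= m)%N.
Proof.
move=> Gg; case: HS => _ /(_ g Gg) [m0 hm0].
have ex : exists n, `[< has_word_of_length S g n >] by exists m0; exact/asboolP.
case: (ex_minnP ex) => m /asboolP hm hmin.
rewrite /word_length; apply: (@xgetPex _ 0%N (fun m => has_word_of_length S g m /\
   (forall m', has_word_of_length S g m' -> (m <= m')%N))).
exists m; split => // m' hm'; apply: hmin; exact/asboolP.
Qed.

Lemma wl_le g m : Gamma g -> has_word_of_length S g m -> (wl g <= m)%N.
Proof. by move=> /wl_spec [_ h]; apply: h. Qed.

Lemma wl_word g : Gamma g -> has_word_of_length S g (wl g).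
Proof. by move=> /wl_spec []. Qed.

Lemma wl1 : wl 1%:M = 0%N.
Proof.
apply/eqP; rewrite -leqn0; apply: wl_le; first exact: G_one.
by exists [::]; split.
Qed.

Lemma wl_mul g h : Gamma g -> Gamma h -> (wl (g *m h) <= wl g + wl h)%N.
Proof.
move=> Gg Gh; apply: wl_le; first exact: G_mul.
have [w1 [s1 l1 e1]] := wl_word Gg; have [w2 [s2 l2 e2]] := wl_word Gh.
exists (w1 ++ w2); split; first by rewrite size_cat s1 s2.
  by move=> x; rewrite mem_cat => /orP [/l1|/l2].
by rewrite word_eval_cat e1 e2.
Qed.

Lemma letter_inv x : is_letter S x -> is_letter S (invmx x).
Proof.
case=> h; [right; by rewrite invmxK | by left].
Qed.

Lemma word_eval_rev (w : seq 'M[R]_d) : (forall x, x \in w -> is_letter S x) ->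
  word_eval (rev (map invmx w)) = invmx (word_eval w).
Proof.
elim: w => [|x w IH] hw /=.
  by rewrite /word_eval /= -{1}(mulmx1 (invmx 1%:M)) mulVmx // unitmx1.
rewrite rev_cons -cats1 word_eval_cat IH; last first.
  by move=> y yw; apply: hw; rewrite inE yw orbT.
rewrite /= mulmx1 invmxM' //.
  apply: G_unit; apply: letter_G; apply: hw; by rewrite inE eqxx.
apply: G_unit; apply: word_G => y yw; apply: hw; by rewrite inE yw orbT.
Qed.

Lemma wl_inv_le g : Gamma g -> (wl (invmx g) <= wl g)%N.
Proof.
move=> Gg; apply: wl_le; first exact: G_inv.
have [w [s l e]] := wl_word Gg.
exists (rev (map invmx w)); split.
- by rewrite size_rev size_map.
- by move=> x; rewrite mem_rev => /mapP [y /l yl ->]; apply: letter_inv.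
- by rewrite word_eval_rev // e.
Qed.

Lemma wl_inv g : Gamma g -> wl (invmx g) = wl g.
Proof.
move=> Gg; apply/eqP; rewrite eqn_leq wl_inv_le //=.
by have := wl_inv_le (G_inv Gg); rewrite invmxK.
Qed.


Lemma mpowSr (g : 'M[R]_d) n : mpow g n.+1 = mpow g n *m g.
Proof.
elim: n => [|n IH]; first by rewrite /mpow /= mulmx1 mul1mx.
have -> : mpow g n.+2 = g *m mpow g n.+1 by [].
by rewrite {1}IH mulmxA.
Qed.

Lemma mpowD (g : 'M[R]_d) m n : mpow g (m + n) = mpow g m *m mpow g n.
Proof.
elim: m => [|m IH]; first by rewrite add0n /mpow /= mul1mx.
have -> : mpow g (m.+1 + n) = g *m mpow g (m + n) by [].
by rewrite IH mulmxA.
Qed.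

Lemma mpow_G g n : Gamma g -> Gamma (mpow g n).
Proof.
move=> Gg; elim: n => [|n IH]; first exact: G_one.
exact: G_mul.
Qed.

Lemma gp_self g : Gamma g -> gromov_product S g g = (wl g)%:R.
Proof.
move=> Gg; rewrite /gromov_product mulVmx ?G_unit // wl1 subr0.
lra.
Qed.

Definition Ag g : R := gromov_product S (invmx g) g.

Lemma gp_inv g : Gamma g -> gromov_product S g (invmx g) = Ag g.
Proof.
move=> Gg; rewrite /Ag /gromov_product invmxK -invmxM' ?G_unit // !wl_inv //.
exact: G_mul.
Qed.

Lemma stable_lb g (D : R) :
  (forall x y z, Gamma x -> Gamma y -> Gamma z ->
    Num.min (gromov_product S x y) (gromov_product S y z) - D
      <= gromov_product S x z) ->
  0 <= D -> Gamma g ->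
  2 * Num.max (Ag g) 0 + 2 * D < (wl g)%:R ->
  (wl g)%:R - 2 * Num.max (Ag g) 0 - 2 * D <= stable_length S g.
Proof.
move=> Hh D0 Gg hL.
set a := fun n => (wl (mpow g n))%:R : R.
have a0 : a 0%N = 0 by rewrite /a /mpow /= wl1.
have a1 : a 1%N = (wl g)%:R by rewrite /a /mpow /= mulmx1.
have ap : forall n, 0 <= a n by move=> n; rewrite /a ler0n.
have sa : forall m n, a (m + n)%N <= a m + a n.
  move=> m n; rewrite /a mpowD -natrD ler_nat; apply: wl_mul; exact: mpow_G.
have mr : 0 <= Num.max (Ag g) 0 by rewrite le_max lexx orbT.
have ml : Ag g <= Num.max (Ag g) 0 by rewrite le_max lexx.
have ch := @chain_arith R a (wl g)%:R (Num.max (Ag g) 0) D a0 a1 mr D0 hL.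
have key : forall n, n%:R * ((wl g)%:R - 2 * Num.max (Ag g) 0 - 2 * D) <= a n.
  apply: ch => n.
  have := Hh (invmx g) (invmx (mpow g n.+1)) g (G_inv Gg) (G_inv (mpow_G n.+1 Gg)) Gg.
  have Gn := mpow_G n Gg; have Gn1 := mpow_G n.+1 Gg.
  rewrite -/(Ag g) /gromov_product !invmxK !wl_inv //.
  rewrite [X in g *m invmx X]mpowSr invmxM' ?G_unit //.
  rewrite mulmxA mulmxV ?G_unit // mul1mx wl_inv; last exact: mpow_G.
  rewrite -(mpowSr g n.+1).
  rewrite -/(a n) -/(a n.+1) -/(a n.+2).
  move=> h; apply: le_trans ml; apply: le_trans h.
  by [].
rewrite /stable_length; apply: limr_ge.
  exact: (fekete a0 ap sa).
near=> n.
rewrite ler_pdivlMr ?ltr0Sn // mulrC; exact: key.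
Unshelve. all: by end_near.
Qed.

End WL.

Theorem lemma2p17 (R : realType) (d : nat) (Gamma : set 'M[R]_d)
  (S : seq 'M[R]_d) (gamma : nat -> 'M[R]_d) :
  (1 < d)%N ->
  is_subgroup_SL Gamma ->
  torsion_free Gamma ->
  generates S Gamma ->
  projective_anosov S Gamma ->
  (forall k, Gamma (gamma k)) ->
  converges_at_infinity S gamma ->
  converges_at_infinity S (fun k => invmx (gamma k)) ->
  ~ same_boundary_limit S gamma (fun k => invmx (gamma k)) ->
  (fun k => lambda_ 0 (gamma k)) @ \oo --> +oo.
Proof.
move=> d1 HG tf HS [[dl Hh] [c [c' [c0 [c'0 Hc]]]]] Gk hc1 hc2 hns.
set D := Num.max dl 0.
have D0 : 0 <= D by rewrite le_max lexx orbT.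
have dD : dl <= D by rewrite le_max lexx.
have Hh' : forall x y z, Gamma x -> Gamma y -> Gamma z ->
    Num.min (gromov_product S x y) (gromov_product S y z) - D
      <= gromov_product S x z.
  move=> x y z Gx Gy Gz; have := Hh x y z Gx Gy Gz; lra.
have [M0 HM0] : exists M0 : R, forall N, exists i j, [/\ (N <= i)%N, (N <= j)%N &
    gromov_product S (gamma i) (invmx (gamma j)) < M0].
  apply: NNPP => hne; apply: hns => M.
  apply: NNPP => h2; apply: hne; exists M => N.
  apply: NNPP => h3; apply: h2; exists N => i j hi hj.
  apply: NNPP => h4; apply: h3; exists i, j; split => //.
  by rewrite ltNge; apply/negP.
set T := M0 + 2 * D.
have [N1 HN1] := hc1 T; have [N2 HN2] := hc2 T.
have [i [j [hi hj hij]]] := HM0 (maxn N1 N2).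
have HA : forall k, (maxn N1 N2 <= k)%N -> Ag S (gamma k) < T.
  move=> k hk; rewrite -(gp_inv HG HS (Gk k)).
  rewrite ltNge; apply/negP => hA.
  have h1 := Hh' (gamma i) (gamma k) (invmx (gamma k)) (Gk i) (Gk k) (G_inv HG (Gk k)).
  have h2 := Hh' (gamma i) (invmx (gamma k)) (invmx (gamma j)) (Gk i)
     (G_inv HG (Gk k)) (G_inv HG (Gk j)).
  have e1 : T <= gromov_product S (gamma i) (gamma k).
    apply: HN1; [exact: leq_trans (leq_maxl _ _) hi | exact: leq_trans (leq_maxl _ _) hk].
  have e2 : T <= gromov_product S (invmx (gamma k)) (invmx (gamma j)).
    apply: HN2; [exact: leq_trans (leq_maxr _ _) hk | exact: leq_trans (leq_maxr _ _) hj].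
  have m1 : T <= Num.min (gromov_product S (gamma i) (gamma k))
      (gromov_product S (gamma k) (invmx (gamma k))) by rewrite le_min e1 hA.
  have e3 : T - D <= gromov_product S (gamma i) (invmx (gamma k)) by lra.
  have m2 : T - D <= Num.min (gromov_product S (gamma i) (invmx (gamma k)))
      (gromov_product S (invmx (gamma k)) (invmx (gamma j))).
    rewrite le_min e3 /=; lra.
  have hT : T = M0 + 2 * D by []. lra.
apply/cvgryPge => B.
set W := Num.max ((2 * B + c') / c) 0.
have W1 : (2 * B + c') / c <= W by rewrite le_max lexx.
have W0 : 0 <= W by rewrite le_max lexx orbT.
set T' := Num.max T 0.
have T'1 : T <= T' by rewrite le_max lexx.
have [N3 HN3] := hc1 (W + 2 * T' + 2 * D + 1).
near=> k.
have hk : (maxn (maxn N1 N2) N3 <= k)%N by near: k; exact: nbhs_infty_ge.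
have Gk' := Gk k.
have Lk : W + 2 * T' + 2 * D + 1 <= (word_length S (gamma k))%:R.
  by rewrite -(gp_self HG HS Gk'); apply: HN3; exact: leq_trans (leq_maxr _ _) hk.
have hAk := HA k (leq_trans (leq_maxl _ _) hk).
have mA : Num.max (Ag S (gamma k)) 0 <= T'.
  rewrite ge_max; apply/andP; split; last by rewrite le_max lexx orbT.
  apply: le_trans T'1; exact: ltW.
have st := stable_lb HG HS Hh' D0 Gk'.
have st' : (word_length S (gamma k))%:R - 2 * Num.max (Ag S (gamma k)) 0 - 2 * D
     <= stable_length S (gamma k) by apply: st; lra.
have an := Hc _ Gk'.
have ls := @lam_sum R d (gamma k) d1 (match HG with And4 _ _ _ h => h _ Gk' end).
have cW : 2 * B + c' <= c * W.
  by have := ler_wpM2l (ltW c0) W1; rewrite [c * (_ / c)]mulrC divfK // gt_eqF.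
have cS : c * W <= c * stable_length S (gamma k).
  apply: ler_wpM2l; [exact: ltW | lra].
lra.
Unshelve. all: by end_near.
Qed.
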